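(* Let $C=2$, $k_1,k_2\ge 1$, and let $w^*_{1,1},\dots,w^*_{1,k_1},w^*_{2,1},\dots,w^*_{2,k_2}\in\mathbb{R}^d/\mathbb{R}\mathbf{1}$. Let $$\mathcal{B}=\{x\in\mathbb{R}^d/\mathbb{R}\mathbf{1}:\ d_{\rm tr}(x,-w^*_{1,i})=d_{\rm tr}(x,-w^*_{2,j})\text{ for some } i\in[k_1],\ j\in[k_2]\}.$$ Then $\mathcal{B}$ contains no full-dimensional cell (i.e. has empty interior in $\mathbb{R}^d/\mathbb{R}\mathbf{1}\cong\mathbb{R}^{d-1}$) if and only if for every $i\in[k_1]$ and $j\in[k_2]$ the pair $w^*_{1,i},w^*_{2,j}$ is in weak general position.
   Context: The tropical projective torus is $\mathbb{R}^d/\mathbb{R}\mathbf{1}$, $\mathbf{1}=(1,\dots,1)$, identified with $\mathbb{R}^{d-1}$ via $x\mapsto(x_2-x_1,\dots,x_d-x_1)$. Tropical metric: $d_{\rm tr}(x,y)=\max_{i}(x_i-y_i)-\min_i(x_i-y_i)$. A tropical ball $B_x(r)=\{y:d_{\rm tr}(x,y)\le r\}$ is a classical polytope whose facets lie in hyperplanes of the form $\{y: y_a-y_b=\text{const}\}$, $a\ne b$. A pair of points $p,q\in\mathbb{R}^d/\mathbb{R}\mathbf{1}$ is in weak general position (with respect to the tropical ball) if they do not lie in a common hyperplane parallel to a facet of a tropical ball, i.e. $p_a-p_b\neq q_a-q_b$ for all $a\neq b$ in $[d]$. $[k]=\{1,\dots,k\}$. *)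

(* Defs.v *)
From HB Require Import structures.
From mathcomp Require Import all_boot all_order all_algebra.
From mathcomp Require Import all_classical all_reals all_analysis.
Set Implicit Arguments. Unset Strict Implicit. Unset Printing Implicit Defensive.
Import Order.TTheory GRing.Theory Num.Theory.
Import numFieldNormedType.Exports.
Local Open Scope classical_set_scope.
Local Open Scope ring_scope.

(* Points of R^d with d = n.+1 are row vectors 'rV[R]_(n.+1); a point of the
   tropical projective torus R^d / R1 is represented by any of its representatives. *)

Definition dtr (R : realType) (n : nat) (x y : 'rV[R]_n.+1) : R :=
  \big[Num.max/(x 0 ord0 - y 0 ord0)]_(i < n.+1) (x 0 i - y 0 i)
  - \big[Num.min/(x 0 ord0 - y 0 ord0)]_(i < n.+1) (x 0 i - y 0 i).

(* identification R^d / R1 ~ R^(d-1) : x |-> (x_2 - x_1, ..., x_d - x_1) *)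
Definition torus_coord (R : realType) (n : nat) (x : 'rV[R]_n.+1) : 'rV[R]_n :=
  \row_(j < n) (x 0 (lift ord0 j) - x 0 ord0).

Definition weak_general_position (R : realType) (n : nat) (p q : 'rV[R]_n.+1) : Prop :=
  forall a b : 'I_n.+1, a != b -> p 0 a - p 0 b != q 0 a - q 0 b.

Definition bisector_set (R : realType) (n k1 k2 : nat)
  (w1 : 'I_k1 -> 'rV[R]_n.+1) (w2 : 'I_k2 -> 'rV[R]_n.+1) : set 'rV[R]_n :=
  (@torus_coord R n) @` [set x : 'rV[R]_n.+1 |
     exists (i : 'I_k1) (j : 'I_k2), dtr x (- w1 i) = dtr x (- w2 j)].

(* Main.v *)
From HB Require Import structures.
From mathcomp Require Import all_boot all_order all_algebra.
From mathcomp Require Import all_classical all_reals all_analysis.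
Import Order.TTheory GRing.Theory Num.Theory.
Import numFieldNormedType.Exports.
From mathcomp Require Import ring lra.
Require Import Defs.
Set Implicit Arguments. Unset Strict Implicit.
Local Open Scope classical_set_scope.
Local Open Scope ring_scope.

Section Big.
Variable R : realType.

Lemma bmax_seq_ge (I : eqType) (s : seq I) (F : I -> R) x0 k :
  k \in s -> F k <= \big[Num.max/x0]_(i <- s) F i.
Proof.
elim: s => //= h s IH; rewrite in_cons big_cons => /orP[/eqP->|/IH H].
  by rewrite le_max lexx.
by rewrite le_max H orbT.
Qed.

Lemma bmin_seq_le (I : eqType) (s : seq I) (F : I -> R) x0 k :
  k \in s -> \big[Num.min/x0]_(i <- s) F i <= F k.
Proof.
elim: s => //= h s IH; rewrite in_cons big_cons => /orP[/eqP->|/IH H].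
  by rewrite ge_min lexx.
by rewrite ge_min H orbT.
Qed.

Variable m : nat.
Implicit Types F : 'I_m.+1 -> R.

Lemma bmax_ge F k : F k <= \big[Num.max/F ord0]_i F i.
Proof. exact: bmax_seq_ge (mem_index_enum _). Qed.

Lemma bmin_le F k : \big[Num.min/F ord0]_i F i <= F k.
Proof. exact: bmin_seq_le (mem_index_enum _). Qed.

Lemma bmax_att F : exists a, \big[Num.max/F ord0]_i F i = F a.
Proof.
apply: (big_ind (fun x => exists a, x = F a)); first by exists ord0.
  move=> x y [a ->] [b ->]; rewrite maxEle; case: ifP => _; by [exists b|exists a].
by move=> i _; exists i.
Qed.

Lemma bmin_att F : exists a, \big[Num.min/F ord0]_i F i = F a.
Proof.
apply: (big_ind (fun x => exists a, x = F a)); first by exists ord0.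
  move=> x y [a ->] [b ->]; rewrite minEle; case: ifP => _; by [exists a|exists b].
by move=> i _; exists i.
Qed.

Lemma bmax_eq F a : (forall k, F k <= F a) -> \big[Num.max/F ord0]_i F i = F a.
Proof.
move=> H; apply/le_anti; rewrite bmax_ge andbT.
apply: (big_ind (fun x => x <= F a)) => //.
by move=> x y hx hy; rewrite ge_max hx hy.
Qed.

Lemma bmin_eq F a : (forall k, F a <= F k) -> \big[Num.min/F ord0]_i F i = F a.
Proof.
move=> H; apply/le_anti; rewrite bmin_le /=.
apply: (big_ind (fun x => F a <= x)) => //.
by move=> x y hx hy; rewrite le_min hx hy.
Qed.
End Big.

Require Import Defs.
Set Implicit Arguments. Unset Strict Implicit.

Lemma flat (R : realType) m (F : 'I_m.+1 -> R) a b :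
  \big[Num.max/F ord0]_i F i = F a -> \big[Num.min/F ord0]_i F i = F b ->
  F a = F b -> forall i, F i = F a.
Proof.
move=> ha hb e i; apply/le_anti.
rewrite -{1}ha bmax_ge /= e -hb bmin_le //.
Qed.

Lemma keyA (R : realType) n (hn : (0 < n)%N) (z p q : 'rV[R]_n.+1) :
  weak_general_position p q -> dtr z (- p) = dtr z (- q) ->
  exists a b c d : 'I_n.+1, [/\ a != b, ~~ ((a == c) && (b == d)) &
    z 0 a - z 0 b - z 0 c + z 0 d = - p 0 a + p 0 b + q 0 c - q 0 d].
Proof.
move=> wgp; rewrite /dtr.
set Fp := fun i => z 0 i - (- p) 0 i.
set Fq := fun i => z 0 i - (- q) 0 i.
have EFp : forall i, Fp i = z 0 i + p 0 i by move=> i; rewrite /Fp mxE opprK.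
have EFq : forall i, Fq i = z 0 i + q 0 i by move=> i; rewrite /Fq mxE opprK.
have [a ha] := bmax_att Fp; have [b hb] := bmin_att Fp.
have [c hc] := bmax_att Fq; have [d hd] := bmin_att Fq.
rewrite ha hb hc hd => E.
have one_lt : (1 < n.+1)%N by [].
pose one := Ordinal one_lt.
case: (eqVneq a b) => [ab|ab].
  have Fpf := flat ha hb (congr1 Fp ab).
  have Fqf : Fq c = Fq d by move: E; rewrite ab; lra.
  have Fqf' := flat hc hd Fqf.
  case/negP: (wgp ord0 one isT); apply/eqP.
  have := Fpf ord0; have := Fpf one; have := Fqf' ord0; have := Fqf' one.
  rewrite !EFp !EFq; lra.
case: (boolP ((a == c) && (b == d))) => [/andP[/eqP ac /eqP bd]|H].
  case/negP: (wgp a b ab); apply/eqP.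
  move: E; rewrite -ac -bd !EFp !EFq; lra.
exists a, b, c, d; split => //.
move: E; rewrite !EFp !EFq; lra.
Qed.
Lemma nonroot (R : realType) (p : {poly R}) d : p != 0 -> 0 < d ->
  exists t, 0 < t < d /\ p.[t] != 0.
Proof.
move=> p0 d0.
pose rs := mkseq (fun k : nat => d / (k.+2)%:R) (size p).
have inj : injective (fun k : nat => d / (k.+2)%:R).
  move=> k l /= /(mulfI (lt0r_neq0 d0)) /invr_inj /eqP.
  by rewrite eqr_nat => /eqP [].
case: (boolP (all (root p) rs)) => [H|/allPn [t tin nr]].
  have := max_poly_roots p0 H (mkseq_uniq _ inj).
  by rewrite size_mkseq ltnn.
move: tin => /mapP [k _ Et]; rewrite Et in nr; exists (d / (k.+2)%:R); split; last by [].
rewrite divr_gt0 ?ltr0Sn //=.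
rewrite ltr_pdivrMr ?ltr0Sn // ltr_pMr //.
by rewrite (_ : 1 = 1%:R) // ltr_nat.
Qed.
Lemma quad_neq0 (R : realType) m (a b c d : 'I_m) (C : R) :
  a != b -> ~~ ((a == c) && (b == d)) ->
  (C%:P + 'X^(a.+1) - 'X^(b.+1) - 'X^(c.+1) + 'X^(d.+1) : {poly R}) != 0.
Proof.
move=> ab H; apply/eqP => H0.
case: (eqVneq a c) => [ac|ac].
  rewrite ac eqxx /= in H.
  have := congr1 (fun q : {poly R} => q`_(d.+1)) H0.
  rewrite !(coefD, coefB, coefN, coefC, coefXn) /= !eqSS eqxx.
  have -> : ((d : nat) == b) = false by apply/negbTE; rewrite eq_sym.
  rewrite -ac.
rewrite /= mulr0n mulr1n.
lra.
have := congr1 (fun q : {poly R} => q`_(a.+1)) H0.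
rewrite !(coefD, coefB, coefN, coefC, coefXn) /= !eqSS eqxx.
have -> : ((a : nat) == b) = false by apply/negbTE.
have -> : ((a : nat) == c) = false by apply/negbTE.
case: (_ == _); rewrite /= ?mulr0n ?mulr1n; lra.
Qed.

Lemma tc_diff (R : realType) n (z u : 'rV[R]_n.+1) :
  torus_coord z = torus_coord u -> forall k, z 0 k - z 0 ord0 = u 0 k - u 0 ord0.
Proof.
move=> E k; case: (unliftP ord0 k) => [j ->|->]; last by rewrite !subrr.
by have := congr1 (fun M : 'M[R]_(1, n) => M 0 j) E; rewrite !mxE.
Qed.

Lemma dir1 (R : realType) (n k1 k2 : nat) (hn : (0 < n)%N)
  (w1 : 'I_k1 -> 'rV[R]_n.+1) (w2 : 'I_k2 -> 'rV[R]_n.+1) :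
  (forall (i : 'I_k1) (j : 'I_k2), weak_general_position (w1 i) (w2 j)) ->
  interior (bisector_set w1 w2) = set0.
Proof.
move=> wgp; apply/seteqP; split => // y Hy.
have [x0 _ Ex0] := interior_subset Hy.
have [e e0 He] := (nbhs_ballP _ _).1 Hy.
pose T := ('I_k1 * 'I_k2 * 'I_n.+1 * 'I_n.+1 * 'I_n.+1 * 'I_n.+1)%type.
pose kap (s : T) : R := - w1 s.1.1.1.1.1 0 s.1.1.1.2 + w1 s.1.1.1.1.1 0 s.1.1.2
   + w2 s.1.1.1.1.2 0 s.1.2 - w2 s.1.1.1.1.2 0 s.2.
pose Cs (s : T) : R := x0 0 s.1.1.1.2 - x0 0 s.1.1.2 - x0 0 s.1.2 + x0 0 s.2 - kap s.
pose Pol (s : T) : {poly R} := (Cs s)%:P + 'X^(s.1.1.1.2.+1) - 'X^(s.1.1.2.+1)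
   - 'X^(s.1.2.+1) + 'X^(s.2.+1).
pose good (s : T) := (s.1.1.1.2 != s.1.1.2) && ~~ ((s.1.1.1.2 == s.1.2) && (s.1.1.2 == s.2)).
pose Q := \prod_(s | good s) Pol s.
have Q0 : Q != 0.
  apply/prodf_neq0 => s /andP [h1 h2]; exact: quad_neq0.
have e0' : 0 < e := e0.
have m0 : 0 < Num.min e 1 by rewrite lt_min e0' ltr01.
have [t [/andP [t0 te] Qt]] := nonroot Q0 m0.
have te' : t < e by move: te; rewrite lt_min => /andP [].
have t1 : t < 1 by move: te; rewrite lt_min => /andP [].
pose u := \row_(k < n.+1) (x0 0 k + t ^+ k.+1).
have By : bisector_set w1 w2 (torus_coord u).
  apply: He; split => // i j; rewrite ord1 /ball /= -Ex0 !mxE.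
  have h1 : 0 <= t ^+ (lift ord0 j).+1 by rewrite exprn_ge0 // ltW.
  have h2 : t ^+ (lift ord0 j).+1 <= t.
    by rewrite exprS ler_piMr ?(ltW t0) ?exprn_ile1 ?(ltW t0) ?(ltW t1).
  rewrite expr1 ltr_norml; apply/andP; split; lra.
have [z [i [j Hij]] Ez] := By.
have [a [b [c [d [ab nacbd Eq]]]]] := keyA hn (wgp i j) Hij.
have D := tc_diff Ez.
pose s : T := (i, j, a, b, c, d).
have gs : good s by rewrite /good /= ab nacbd.
move: Qt; rewrite horner_prod prodf_seq_neq0 => /allP /(_ s (mem_index_enum s)).
rewrite gs /= => /eqP; apply.
rewrite /Pol /Cs /kap /= !hornerE.
have := D a; have := D b; have := D c; have := D d; rewrite !mxE.
move: Eq; lra.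
Qed.

Lemma dir2 (R : realType) (n k1 k2 : nat)
  (w1 : 'I_k1 -> 'rV[R]_n.+1) (w2 : 'I_k2 -> 'rV[R]_n.+1) :
  interior (bisector_set w1 w2) = set0 ->
  (forall (i : 'I_k1) (j : 'I_k2), weak_general_position (w1 i) (w2 j)).
Proof.
move=> Hint i j a b ab; apply/negP => /eqP E.
set p := w1 i in E *; set q := w2 j in E *.
pose S := \sum_(k < n.+1) (`|p 0 k| + `|q 0 k|).
have Sb : forall k, `|p 0 k| <= S /\ `|q 0 k| <= S.
  move=> k; rewrite /S (bigD1 k) //=.
  have : 0 <= \sum_(l < n.+1 | l != k) (`|p 0 l| + `|q 0 l|).
    by apply: sumr_ge0 => l _; rewrite addr_ge0.
  have := normr_ge0 (p 0 k); have := normr_ge0 (q 0 k).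
  move=> h1 h2 h3; split; lra.
have S0 : 0 <= S by have [h _] := Sb a; have h' := normr_ge0 (p 0 a); lra.
pose M := 2 + 2 * S.
pose x := \row_(k < n.+1) (if k == a then M else if k == b then - M else 0).
have xa : x 0 a = M by rewrite mxE eqxx.
have xb : x 0 b = - M by rewrite mxE eq_sym (negbTE ab) eqxx.
have xna : forall k, k != a -> x 0 k <= 0.
  move=> k /negbTE ka; rewrite mxE ka; case: ifP => _ //; rewrite /M; lra.
have xnb : forall k, k != b -> 0 <= x 0 k.
  move=> k /negbTE kb; rewrite mxE kb; case: ifP => _ //; rewrite /M; lra.
have : interior (bisector_set w1 w2) (torus_coord x); last by rewrite Hint.
apply/nbhs_ballP; exists 1 => //= y' [_ Hb].
pose z := \row_(k < n.+1) (oapp (fun j => y' 0 j) 0 (unlift ord0 k)).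
have Ez : torus_coord z = y'.
  by apply/rowP => l; rewrite !mxE liftK ?unlift_none /= subr0.
have Hz : forall k, x 0 k - x 0 ord0 - 1 < z 0 k < x 0 k - x 0 ord0 + 1.
  move=> k; case: (unliftP ord0 k) => [l ->|->].
    have := Hb 0 l; rewrite /ball /= !mxE liftK /= ltr_norml => /andP [h1 h2].
    apply/andP; split; lra.
  rewrite subrr /z mxE unlift_none /=; apply/andP; split; lra.
exists z => //; exists i, j.
have key : forall w : 'rV[R]_n.+1, (forall k, `|w 0 k| <= S) ->
    dtr z (- w) = z 0 a + w 0 a - (z 0 b + w 0 b).
  move=> w wS; rewrite /dtr.
  have EF : forall k, z 0 k - (- w) 0 k = z 0 k + w 0 k by move=> k; rewrite [(- w) 0 k]mxE opprK.
  rewrite (@bmax_eq _ _ _ a) => [|k]; last first.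
    rewrite !EF; case: (eqVneq k a) => [->|ka]; first by rewrite lexx.
    have := xna k ka; have := Hz k; have := Hz a; rewrite xa => /andP [h1 h2] /andP [h3 h4].
    have := wS k; have := wS a; rewrite !ler_norml => /andP [h5 h6] /andP [h7 h8].
    rewrite /M in h1 h2; lra.
  rewrite (@bmin_eq _ _ _ b) => [|k]; last first.
    rewrite !EF; case: (eqVneq k b) => [->|kb]; first by rewrite lexx.
    have := xnb k kb; have := Hz k; have := Hz b; rewrite xb => /andP [h1 h2] /andP [h3 h4].
    have := wS k; have := wS b; rewrite !ler_norml => /andP [h5 h6] /andP [h7 h8].
    rewrite /M in h1 h2; lra.
  by rewrite !EF.
rewrite (key p) => [|k]; last by case: (Sb k).
rewrite (key q) => [|k]; last by case: (Sb k).
lra.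
Qed.

Unset Implicit Arguments.

Theorem mainTheorem2 (R : realType) (n k1 k2 : nat) (hn : (0 < n)%N)
  (hk1 : (1 <= k1)%N) (hk2 : (1 <= k2)%N)
  (w1 : 'I_k1 -> 'rV[R]_n.+1) (w2 : 'I_k2 -> 'rV[R]_n.+1) :
  interior (bisector_set w1 w2) = set0 <->
  (forall (i : 'I_k1) (j : 'I_k2), weak_general_position (w1 i) (w2 j)).
Proof.
split; [exact: dir2 | exact: dir1].
Qed.
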